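(* There is no set $\Lambda$ of $\mathcal L$-formulas such that, for every playable $Ł_n$-frame $\mathfrak F$, $\mathfrak F$ is truly playable if and only if every formula of $\Lambda$ is valid in $\mathfrak F$.
   Context: $Ł_n=\{0,\frac1n,\dots,1\}$ with $\neg x=1-x$, $x\oplus y=\min(x+y,1)$, $x\odot y=\max(x+y-1,0)$, $x\to y=\min(1,1-x+y)$, $\wedge=\min$, applied pointwise. $N$ finite set of players, $|N|\ge2$. An $Ł_n$-valued effectivity function on a set $S$ is a map $E:\mathcal P N\times Ł_n^S\to Ł_n$. It is: outcome monotonic if $f\ge g$ implies $E(C,f)\ge E(C,g)$; $N$-maximal if $\neg E(\varnothing,\neg f)\le E(N,f)$; superadditive if $E(C_1,f)\wedge E(C_2,g)\le E(C_1\cup C_2,f\wedge g)$ whenever $C_1\cap C_2=\varnothing$; homogeneous if $E(C,f\oplus f)=E(C,f)\oplus E(C,f)$ and $E(C,f\odot f)=E(C,f)\odot E(C,f)$; has liveness if $E(C,1)=1$ for all $C$; has safety if $E(C,0)=0$ for all $C$; principal if there is $g$ with $\{f\mid E(\varnothing,f)=1\}=\{f\mid f\ge g\odot\cdots\odot g\ (n\text{ factors})\}$. Playable: first six properties; truly playable: playable and principal. Formulas of $\mathcal L$: $\phi::=1\mid p\mid\phi\to\phi\mid\neg\phi\mid[C]\phi$ ($p$ in a countably infinite set $\mathsf{Prop}$, $C\subseteq N$). An $Ł_n$-frame is $(S,E)$ with $S\ne\varnothing$ and $E(u)$ an $Ł_n$-valued effectivity function on $S$ for each $u\in S$; it is (truly)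 playable if every $E(u)$ is. A model on it adds $\mathrm{Val}:S\times\mathsf{Prop}\to Ł_n$, extended by $\mathrm{Val}(u,1)=1$, $\mathrm{Val}(u,\neg\phi)=\neg\mathrm{Val}(u,\phi)$, $\mathrm{Val}(u,\phi\to\psi)=\mathrm{Val}(u,\phi)\to\mathrm{Val}(u,\psi)$, $\mathrm{Val}(u,[C]\phi)=E(u)(C,\mathrm{Val}(-,\phi))$. A formula is true in a model if its value is $1$ at every state, and valid in a frame if true in every model based on the frame. *)

(* Defs.v *)
From mathcomp Require Import all_boot all_order.
Set Implicit Arguments. Unset Strict Implicit. Unset Printing Implicit Defensive.

(* The Lukasiewicz chain L_n = {0, 1/n, ..., 1} is represented by 'I_n.+1:
   the ordinal k stands for k/n. Operations are transported accordingly. *)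
Definition Luk (n : nat) := 'I_n.+1.

Section Luk.
Variable n : nat.
Definition ltop : Luk n := ord_max.
Definition lbot : Luk n := ord0.
Definition lneg (x : Luk n) : Luk n := inord (n - x).
Definition loplus (x y : Luk n) : Luk n := inord (minn (x + y) n).
Definition lodot (x y : Luk n) : Luk n := inord ((x + y) - n).
Definition limp (x y : Luk n) : Luk n := inord (minn n ((n - x) + y)).
Definition lmin (x y : Luk n) : Luk n := inord (minn x y).
Definition lle (x y : Luk n) : Prop := (nat_of_ord x <= nat_of_ord y)%N.

Fixpoint lpow (k : nat) (x : Luk n) : Luk n :=
  match k with
  | 0 => ltop
  | 1 => x
  | k'.+1 => lodot x (lpow k' x)
  end.
End Luk.

Definition effFun (N : finType) (n : nat) (S : Type) :=
  {set N} -> (S -> Luk n) -> Luk n.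

Section Props.
Variables (N : finType) (n : nat) (S : Type) (E : effFun N n S).

Definition outcome_monotonic : Prop :=
  forall C (f g : S -> Luk n), (forall s, lle (g s) (f s)) -> lle (E C g) (E C f).

Definition N_maximal : Prop :=
  forall f : S -> Luk n, lle (lneg (E set0 (fun s => lneg (f s)))) (E setT f).

Definition superadditive : Prop :=
  forall (C1 C2 : {set N}) (f g : S -> Luk n), C1 :&: C2 = set0 ->
    lle (lmin (E C1 f) (E C2 g)) (E (C1 :|: C2) (fun s => lmin (f s) (g s))).

Definition homogeneous : Prop :=
  forall C (f : S -> Luk n),
    E C (fun s => loplus (f s) (f s)) = loplus (E C f) (E C f) /\
    E C (fun s => lodot (f s) (f s)) = lodot (E C f) (E C f).

Definition liveness : Prop := forall C, E C (fun _ => ltop n) = ltop n.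
Definition safety : Prop := forall C, E C (fun _ => lbot n) = lbot n.

Definition principal : Prop :=
  exists g : S -> Luk n, forall f : S -> Luk n,
    E set0 f = ltop n <-> (forall s, lle (lpow n (g s)) (f s)).

Definition playable : Prop :=
  outcome_monotonic /\ N_maximal /\ superadditive /\ homogeneous /\
  liveness /\ safety.

Definition truly_playable : Prop := playable /\ principal.
End Props.

Definition playable_frame (N : finType) (n : nat) (S : Type)
  (E : S -> effFun N n S) : Prop := forall u, playable (E u).
Definition truly_playable_frame (N : finType) (n : nat) (S : Type)
  (E : S -> effFun N n S) : Prop := forall u, truly_playable (E u).

(* Formulas of L; Prop = nat (countably infinite) *)
Inductive form (N : finType) : Type :=
  | FTop : form N
  | FVar : nat -> form N
  | FImp : form N -> form N -> form N
  | FNeg : form N -> form N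
  | FBox : {set N} -> form N -> form N.

Fixpoint eval (N : finType) (n : nat) (S : Type) (E : S -> effFun N n S)
  (V : S -> nat -> Luk n) (phi : form N) (u : S) : Luk n :=
  match phi with
  | FTop => ltop n
  | FVar p => V u p
  | FImp a b => limp (eval E V a u) (eval E V b u)
  | FNeg a => lneg (eval E V a u)
  | FBox C a => E u C (eval E V a)
  end.

Definition valid_in_frame (N : finType) (n : nat) (S : Type)
  (E : S -> effFun N n S) (phi : form N) : Prop :=
  forall (V : S -> nat -> Luk n) (u : S), eval E V phi u = ltop n.

(* Main.v *)
Require Import Defs.
From mathcomp Require Import all_boot all_order.
From mathcomp Require Import zify.
From Stdlib Require Import Classical ClassicalEpsilon.

Set Implicit Arguments. Unset Strict Implicit. Unset Printing Implicit Defensive.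

Section Aux.
Variable n : nat.
Local Notation L := (Luk n).

Lemma Lb (x : L) : (nat_of_ord x <= n)%N.
Proof. by have := ltn_ord x. Qed.

Lemma val_lneg (x : L) : nat_of_ord (lneg x) = n - x.
Proof. by rewrite /lneg inordK // ltnS leq_subr. Qed.

Lemma val_lmin (x y : L) : nat_of_ord (lmin x y) = minn x y.
Proof. rewrite /lmin inordK //; have := Lb x; have := Lb y; lia. Qed.

Lemma val_loplus (x y : L) : nat_of_ord (loplus x y) = minn (x + y) n.
Proof. rewrite /loplus inordK //; have := Lb x; have := Lb y; lia. Qed.

Lemma val_lodot (x y : L) : nat_of_ord (lodot x y) = x + y - n.
Proof. rewrite /lodot inordK //; have := Lb x; have := Lb y; lia. Qed.

Lemma val_ltop : nat_of_ord (ltop n) = n. Proof. by []. Qed.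
Lemma val_lbot : nat_of_ord (lbot n) = 0. Proof. by []. Qed.

Lemma lnegK (x : L) : lneg (lneg x) = x.
Proof. apply: ord_inj; rewrite !val_lneg; have := Lb x; lia. Qed.

Definition mono (phi : L -> L) := forall x y, lle x y -> lle (phi x) (phi y).

Definition is_min u (f : nat -> L) v :=
  (forall s, (u < s)%N -> lle v (f s)) /\ exists2 s, (u < s)%N & f s = v.
Definition is_max u (f : nat -> L) v :=
  (forall s, (u < s)%N -> lle (f s) v) /\ exists2 s, (u < s)%N & f s = v.

Lemma ex_min u f : exists v, is_min u f v.
Proof.
suff H : forall k s, (u < s)%N -> (nat_of_ord (f s) <= k)%N -> exists v, is_min u f v.
  by apply: (H n u.+1) => //; apply: Lb.
elim=> [|k IH] s us fs.
- exists (f s); split; last first. by exists s.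
  move=> s' _; rewrite /lle; lia.
- case: (classic (forall s', (u < s')%N -> lle (f s) (f s'))) => [h|h].
  + by exists (f s); split => //; exists s.
  + have [s' hs'] := not_all_ex_not _ _ h.
    have [us' h'] := imply_to_and _ _ hs'.
    apply: (IH s') => //. move: h'; rewrite /lle => /negP; lia.
Qed.

Definition tinf u f := epsilon (inhabits (f u.+1)) (is_min u f).
Lemma tinfP u f : is_min u f (tinf u f).
Proof. exact: epsilon_spec (ex_min u f). Qed.

Lemma min_uniq u f v w : is_min u f v -> is_min u f w -> v = w.
Proof.
move=> [lv [s1 u1 e1]] [lw [s2 u2 e2]]; apply: ord_inj.
have := lv s2 u2; have := lw s1 u1; rewrite /lle e1 e2; lia.
Qed.

Lemma tinfE u f v : is_min u f v -> tinf u f = v.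
Proof. by move=> h; apply: min_uniq (tinfP u f) h. Qed.

Definition tsup u (f : nat -> L) := lneg (tinf u (fun s => lneg (f s))).

Lemma tsupP u f : is_max u f (tsup u f).
Proof.
have [lb [s us e]] := tinfP u (fun s => lneg (f s)).
split.
- move=> s' h; have := lb s' h; rewrite /lle /tsup val_lneg val_lneg.
  have := Lb (f s'); have := Lb (tinf u (fun s => lneg (f s))); lia.
- by exists s => //; rewrite /tsup -e lnegK.
Qed.

Lemma max_uniq u f v w : is_max u f v -> is_max u f w -> v = w.
Proof.
move=> [lv [s1 u1 e1]] [lw [s2 u2 e2]]; apply: ord_inj.
have := lv s2 u2; have := lw s1 u1; rewrite /lle e1 e2; lia.
Qed.

Lemma tsupE u f v : is_max u f v -> tsup u f = v.
Proof. by move=> h; apply: max_uniq (tsupP u f) h. Qed.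

Lemma is_min_map phi u f v : mono phi -> is_min u f v ->
  is_min u (fun s => phi (f s)) (phi v).
Proof.
move=> hm [lb [s us e]]; split; first by move=> s' h; apply: hm; apply: lb.
by exists s => //; rewrite e.
Qed.

Lemma is_max_map phi u f v : mono phi -> is_max u f v ->
  is_max u (fun s => phi (f s)) (phi v).
Proof.
move=> hm [lb [s us e]]; split; first by move=> s' h; apply: hm; apply: lb.
by exists s => //; rewrite e.
Qed.

Lemma is_min_ext u f g v : (forall s, (u < s)%N -> f s = g s) -> is_min u f v -> is_min u g v.
Proof.
move=> E [lb [s us e]]; split; first by move=> s' h; rewrite -E //; apply: lb.
by exists s => //; rewrite -E.
Qed.

Lemma is_max_ext u f g v : (forall s, (u < s)%N -> f s = g s) -> is_max u f v -> is_max u g v.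
Proof.
move=> E [lb [s us e]]; split; first by move=> s' h; rewrite -E //; apply: lb.
by exists s => //; rewrite -E.
Qed.

Lemma is_min_const u c : is_min u (fun _ => c) c.
Proof. by split; [move=> s _; rewrite /lle leqnn | exists u.+1]. Qed.
Lemma is_max_const u c : is_max u (fun _ => c) c.
Proof. by split; [move=> s _; rewrite /lle leqnn | exists u.+1]. Qed.

Lemma tinf_incr f i j : (i <= j)%N -> lle (tinf i f) (tinf j f).
Proof.
move=> ij; have [_ [s js e]] := tinfP j f; rewrite -e.
by apply: (proj1 (tinfP i f)); lia.
Qed.

Lemma tsup_decr f i j : (i <= j)%N -> lle (tsup j f) (tsup i f).
Proof.
move=> ij; have [_ [s js e]] := tsupP j f; rewrite -e.
by apply: (proj1 (tsupP i f)); lia.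
Qed.

Lemma stab (a : nat -> nat) B : (forall i j, (i <= j)%N -> (a i <= a j)%N) ->
  (forall k, (a k <= B)%N) -> exists K, forall u, (K <= u)%N -> a u = a K.
Proof.
move=> hm hb.
suff H : forall d K, (B - a K <= d)%N -> exists K', forall u, (K' <= u)%N -> a u = a K'.
  by apply: (H B 0); lia.
elim=> [|d IH] K h.
- exists K => u Ku; have := hm _ _ Ku; have := hb u; lia.
- case: (classic (forall u, (K <= u)%N -> a u = a K)) => [h'|h']; first by exists K.
  have [u hu] := not_all_ex_not _ _ h'.
  have [Ku ne] := imply_to_and _ _ hu.
  apply: (IH u); have := hm _ _ Ku; have := hb u; lia.
Qed.

Lemma tinf_stab f : exists K, forall u, (K <= u)%N -> tinf u f = tinf K f.
Proof.
have [K hK] := @stab (fun k => nat_of_ord (tinf k f)) n (fun i j h => tinf_incr f h)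
  (fun k => Lb _).
by exists K => u h; apply: ord_inj; apply: hK.
Qed.

Lemma tsup_stab f : exists K, forall u, (K <= u)%N -> tsup u f = tsup K f.
Proof.
have [K hK] := @stab (fun k => n - nat_of_ord (tsup k f)) n
  (fun i j h => ltac:(have := tsup_decr f h; rewrite /lle; lia)) (fun k => ltac:(lia)).
exists K => u h; apply: ord_inj; have := hK u h; have := Lb (tsup u f); have := Lb (tsup K f); lia.
Qed.

Definition lim_ev (a : nat -> L) : L :=
  a (epsilon (inhabits 0%N) (fun K => forall u, (K <= u)%N -> a u = a K)).

Lemma lim_evP a : (exists K, forall u, (K <= u)%N -> a u = a K) ->
  exists K, forall u, (K <= u)%N -> a u = lim_ev a.
Proof.
move=> h; exists (epsilon (inhabits 0%N) (fun K => forall u, (K <= u)%N -> a u = a K)).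
exact: epsilon_spec h.
Qed.

Lemma lpow_fix (x : L) k : lodot x x = x -> lpow k.+1 x = x.
Proof.
move=> h; elim: k => [//|k IH].
by change (lodot x (lpow k.+1 x) = x); rewrite IH.
Qed.

Lemma lpow_top k : (0 < k)%N -> lpow k (ltop n) = ltop n.
Proof.
case: k => // k _; apply: lpow_fix; apply: ord_inj; rewrite val_lodot val_ltop; lia.
Qed.

Lemma lpow_bot k : (0 < k)%N -> lpow k (lbot n) = lbot n.
Proof.
case: k => // k _; apply: lpow_fix; apply: ord_inj; rewrite val_lodot val_lbot; lia.
Qed.

End Aux.

Section Frames.
Variables (N : finType) (n : nat).
Local Notation L := (Luk n).

Definition EF (u : nat) (C : {set N}) (f : nat -> L) : L :=
  if C == setT then tsup u f else tinf u f.

Definition EG (C : {set N}) (f : nat -> L) : L := lim_ev (fun k => EF k C f).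

Definition EFr : nat -> effFun N n nat := fun u => EF u.
Definition EGr : nat -> effFun N n nat := fun _ => EG.

Lemma EF_stab C f : exists K, forall u, (K <= u)%N -> EF u C f = EF K C f.
Proof. rewrite /EF; case: (C == setT); [exact: tsup_stab | exact: tinf_stab]. Qed.

Lemma EG_at C f : exists K, forall u, (K <= u)%N -> EF u C f = EG C f.
Proof. exact: lim_evP (EF_stab C f). Qed.

Lemma EF_ext u C f g : (forall s, (u < s)%N -> f s = g s) -> EF u C f = EF u C g.
Proof.
move=> E; rewrite /EF; case: ifP => _.
- by symmetry; apply: tsupE; apply: is_max_ext E (tsupP u f).
- by symmetry; apply: tinfE; apply: is_min_ext E (tinfP u f).
Qed.

Lemma EG_ext k C f g : (forall s, (k < s)%N -> f s = g s) -> EG C f = EG C g.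
Proof.
move=> E; have [K1 h1] := EG_at C f; have [K2 h2] := EG_at C g.
rewrite -(h1 (K1 + K2 + k)); last lia.
rewrite -(h2 (K1 + K2 + k)); last lia.
by apply: EF_ext => s h; apply: E; lia.
Qed.

Lemma EF_map u C f phi : mono phi -> EF u C (fun s => phi (f s)) = phi (EF u C f).
Proof.
move=> hm; rewrite /EF; case: ifP => _.
- by apply: tsupE; apply: is_max_map (tsupP u f).
- by apply: tinfE; apply: is_min_map (tinfP u f).
Qed.

Lemma EF_const u C c : EF u C (fun _ => c) = c.
Proof.
rewrite /EF; case: ifP => _; [apply: tsupE; exact: is_max_const | apply: tinfE; exact: is_min_const].
Qed.

Lemma EF_mono u C (f g : nat -> L) : (forall s, lle (g s) (f s)) -> lle (EF u C g) (EF u C f).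
Proof.
move=> h; rewrite /EF; case: ifP => _.
- have [_ [s us e]] := tsupP u g; rewrite -e; apply: leq_trans (h s) _.
  exact: (proj1 (tsupP u f)).
- have [_ [s us e]] := tinfP u f; rewrite -e; apply: leq_trans (h s).
  exact: (proj1 (tinfP u g)).
Qed.

Lemma EF_some u C f : exists2 s, (u < s)%N & lle (EF u C f) (f s).
Proof.
rewrite /EF; case: ifP => _.
- by have [_ [s us e]] := tsupP u f; exists s => //; rewrite -e /lle leqnn.
- by exists u.+1 => //; apply: (proj1 (tinfP u f)).
Qed.

Lemma EF_low u C f : C != setT -> forall s, (u < s)%N -> lle (EF u C f) (f s).
Proof. by move=> /negbTE h; rewrite /EF h; apply: (proj1 (tinfP u f)). Qed.

Variable set0T : (set0 == setT :> {set N}) = false.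

Lemma EF_playable u : playable (EF u).
Proof.
split; [|split; [|split; [|split; [|split]]]].
- by move=> C f g h; apply: EF_mono.
- by move=> f; rewrite /EF set0T eqxx /tsup /lle leqnn.
- move=> C1 C2 f g hI.
  have nboth : ~~ ((C1 == setT) && (C2 == setT)).
    apply/negP => /andP [/eqP e1 /eqP e2]; move: hI; rewrite e1 e2 setIid => e.
    by move: set0T; rewrite e eqxx.
  case: (boolP (C1 :|: C2 == setT)) => hU.
  + rewrite {3}/EF hU.
    have key : exists2 s, (u < s)%N & lle (lmin (EF u C1 f) (EF u C2 g)) (lmin (f s) (g s)).
      case: (boolP (C1 == setT)) => h1.
      * have h2 : C2 != setT by move: nboth; rewrite h1.
        have [s us hs] := EF_some u C1 f; exists s => //.
        have := EF_low g h2 us; move: hs; rewrite /lle !val_lmin; lia.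
      * have [s us hs] := EF_some u C2 g; exists s => //.
        have := EF_low f h1 us; move: hs; rewrite /lle !val_lmin; lia.
    have [s us hs] := key; apply: leq_trans hs _.
    exact: (proj1 (tsupP u (fun s => lmin (f s) (g s))) s us).
  + have h1 : C1 != setT by apply: contraNneq hU => ->; rewrite setTU.
    have h2 : C2 != setT by apply: contraNneq hU => ->; rewrite setUT.
    rewrite {3}/EF (negbTE hU).
    have [_ [s us e]] := tinfP u (fun s => lmin (f s) (g s)); rewrite -e.
    have := EF_low f h1 us; have := EF_low g h2 us; rewrite /lle !val_lmin; lia.
- move=> C f; split.
  + apply: (EF_map u C f (phi := fun x => loplus x x)).
    by move=> x y; rewrite /lle !val_loplus; lia.
  + apply: (EF_map u C f (phi := fun x => lodot x x)).
    by move=> x y; rewrite /lle !val_lodot; lia.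
- by move=> C; apply: EF_const.
- by move=> C; apply: EF_const.
Qed.

Lemma EG_playable : playable EG.
Proof.
have P := EF_playable.
split; [|split; [|split; [|split; [|split]]]].
- move=> C f g h; have [K1 h1] := EG_at C f; have [K2 h2] := EG_at C g.
  rewrite -(h1 (K1 + K2)); last lia. rewrite -(h2 (K1 + K2)); last lia.
  exact: EF_mono.
- move=> f; have [K1 h1] := EG_at set0 (fun s => lneg (f s)); have [K2 h2] := EG_at setT f.
  rewrite -(h1 (K1 + K2)); last lia. rewrite -(h2 (K1 + K2)); last lia.
  exact: (proj1 (proj2 (P (K1 + K2)))).
- move=> C1 C2 f g hI.
  have [K1 h1] := EG_at C1 f; have [K2 h2] := EG_at C2 g.
  have [K3 h3] := EG_at (C1 :|: C2) (fun s => lmin (f s) (g s)).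
  rewrite -(h1 (K1 + K2 + K3)); last lia. rewrite -(h2 (K1 + K2 + K3)); last lia.
  rewrite -(h3 (K1 + K2 + K3)); last lia.
  exact: (proj1 (proj2 (proj2 (P (K1 + K2 + K3)))) C1 C2 f g hI).
- move=> C f; have [K1 h1] := EG_at C f.
  have [K2 h2] := EG_at C (fun s => loplus (f s) (f s)).
  have [K3 h3] := EG_at C (fun s => lodot (f s) (f s)).
  rewrite -(h1 (K1 + K2 + K3)); last lia. rewrite -(h2 (K1 + K2 + K3)); last lia.
  rewrite -(h3 (K1 + K2 + K3)); last lia.
  exact: (proj1 (proj2 (proj2 (proj2 (P (K1 + K2 + K3))))) C f).
- by move=> C; have [K h] := EG_at C (fun _ => ltop n); rewrite -(h K) // EF_const.
- by move=> C; have [K h] := EG_at C (fun _ => lbot n); rewrite -(h K) // EF_const.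
Qed.

Variable n0 : (0 < n)%N.

Lemma EF_principal u : principal (EF u).
Proof.
exists (fun s => if (u < s)%N then ltop n else lbot n) => f.
rewrite /EF set0T; split.
- move=> h s; case: ifP => us.
  + by rewrite lpow_top // -h; apply: (proj1 (tinfP u f)).
  + by rewrite lpow_bot.
- move=> h; have [_ [s us e]] := tinfP u f; rewrite -e; apply: ord_inj.
  have := h s; rewrite us lpow_top // /lle val_ltop; have := Lb (f s); lia.
Qed.

Lemma EG_not_principal : ~ principal EG.
Proof.
move=> [g hg].
have H0 : forall s0, nat_of_ord (lpow n (g s0)) = 0.
  move=> s0; pose f0 := fun s => if s == s0 then lbot n else ltop n.
  have e : EG set0 f0 = ltop n.
    have [K hK] := EG_at set0 f0; rewrite -(hK (K + s0)); last lia.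
    rewrite /EF set0T; apply: tinfE; split; last by exists (K + s0).+1; rewrite // /f0 ifF //; apply/eqP; lia.
    move=> s h; rewrite /f0 ifF; first by rewrite /lle leqnn.
    by apply/eqP; lia.
  have := (proj1 (hg f0) e s0); rewrite /f0 eqxx /lle val_lbot; lia.
have e : EG set0 (fun _ => lbot n) = ltop n.
  by apply/(hg (fun _ => lbot n)) => s; rewrite /lle H0.
have [K hK] := EG_at set0 (fun _ => lbot n); move: e; rewrite -(hK K) // EF_const.
move/(congr1 (@nat_of_ord _)); rewrite val_lbot val_ltop; lia.
Qed.

End Frames.

Section Eval.
Variables (N : finType) (n : nat).
Local Notation L := (Luk n).

Lemma G_local (V W : nat -> nat -> L) k : (forall s, (k < s)%N -> V s = W s) ->
  forall phi : form N,
  (forall s, (k < s)%N -> eval (@EGr N n) V phi s = eval (@EGr N n) W phi s) /\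
  (forall s s', V s = W s' -> eval (@EGr N n) V phi s = eval (@EGr N n) W phi s').
Proof.
move=> E; elim=> [|p|a [Ia1 Ia2] b [Ib1 Ib2]|a [Ia1 Ia2]|C a [Ia1 Ia2]].
- by [].
- by split => [s h|s s' e] /=; [rewrite E | rewrite e].
- by split => [s h|s s' e] /=; [rewrite Ia1 ?Ib1 | rewrite (Ia2 _ _ e) (Ib2 _ _ e)].
- by split => [s h|s s' e] /=; [rewrite Ia1 | rewrite (Ia2 _ _ e)].
- by split => [s h|s s' e] /=; apply: EG_ext Ia1.
Qed.

Lemma key (V : nat -> nat -> L) (phi : form N) : exists K, forall W m,
  (forall s, (m < s)%N -> V s = W s) -> forall u, (K <= u)%N -> (m <= u)%N ->
  eval (@EFr N n) W phi u = eval (@EGr N n) W phi u.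
Proof.
elim: phi => [|p|a [Ka ha] b [Kb hb]|a [Ka ha]|C a [Ka ha]].
- by exists 0.
- by exists 0.
- exists (Ka + Kb) => W m E u h1 h2 /=.
  by rewrite (ha W m E u) ?(hb W m E u) //; lia.
- exists Ka => W m E u h1 h2 /=.
  by rewrite (ha W m E u).
- have [Ks hs] := EG_at C (eval (@EGr N n) V a).
  exists (Ka + Ks) => W m E u h1 h2 /=.
  rewrite /EFr /EGr.
  have [Gl _] := G_local E a.
  transitivity (EF u C (eval (@EGr N n) W a)).
    by apply: EF_ext => s us; apply: (ha W m E); lia.
  transitivity (EF u C (eval (@EGr N n) V a)).
    by symmetry; apply: EF_ext => s us; apply: Gl; lia.
  rewrite hs; last lia.
  exact: EG_ext Gl.
Qed.

Lemma transfer (phi : form N) :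
  valid_in_frame (@EFr N n) phi -> valid_in_frame (@EGr N n) phi.
Proof.
move=> hv V u0; have [K hK] := key V phi.
pose W := fun s => if s == K then V u0 else V s.
have E : forall s, (K < s)%N -> V s = W s.
  move=> s h; rewrite /W; case: (eqVneq s K) => [e|] //.
  by rewrite e ltnn in h.
have := hK W K E K (leqnn K) (leqnn K); rewrite hv => h.
have [_ Gb] := G_local E phi.
have e : V u0 = W K by rewrite /W eqxx.
by rewrite (Gb _ _ e) -h.
Qed.

End Eval.

Theorem mainTheorem10 (N : finType) (n : nat) :
  (1 < #|N|)%N -> (0 < n)%N ->
  ~ exists Lambda : form N -> Prop,
      forall (S : Type) (E : S -> effFun N n S),
        inhabited S -> playable_frame E ->
        (truly_playable_frame E <->
         forall phi, Lambda phi -> valid_in_frame E phi).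
Proof.
move=> hN hn [Lambda hL].
have set0T : (set0 == setT :> {set N}) = false.
  apply/negbTE/eqP => e; have := cardsT N; rewrite -e cards0 => h.
  by rewrite -h in hN.
have pF : playable_frame (@EFr N n) by move=> u; exact: EF_playable.
have tF : truly_playable_frame (@EFr N n).
  by move=> u; split; [exact: EF_playable | exact: EF_principal].
have pG : playable_frame (@EGr N n) by move=> u; exact: EG_playable.
have vF := proj1 (hL nat (@EFr N n) (inhabits 0%N) pF) tF.
have tG := proj2 (hL nat (@EGr N n) (inhabits 0%N) pG) (fun phi h => transfer (vF phi h)).
exact: (EG_not_principal set0T hn (proj2 (tG 0%N))).
Qed.
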